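(* Let $1\le k<n$. The map $F_k$, defined on $S\in\Theta(k,2n)$ by $F_k(S)=((\lambda^{(1)}_i+\lambda^{(2)}_i)_{1\le i\le k};t)$ with $t=1$ if $S$ is assigned $\uparrow$, $t=2$ if $S$ is assigned $\downarrow$, and $t=0$ otherwise, is an injection $\Theta(k,2n)\to\tilde P(n-k,n)$.
   Context: Root system $D_n$: positive roots $e_a\pm e_b$ ($a<b$); simple roots $e_i-e_{i+1}$ ($i<n$), $e_{n-1}+e_n$; order $\alpha\le\beta$ iff $\beta-\alpha$ is a nonnegative integer combination of simple roots. Base region: roots $e_a\pm e_b$ with $a\le k<b$; its $i$-th double-tailed diamond consists of $e_{k+1-i}\pm e_b$, $b>k$. Top region: $e_a+e_b$, $a<b\le k$. For a set $S$, $\lambda^{(1)}_i$ = number of roots of $S$ in the $i$-th double-tailed diamond, $\lambda^{(2)}_i$ = number of roots of $S$ of the form $e_a+e_{k+1-i}$ with $a<k+1-i$; if $\lambda^{(1)}_i=n-k$ for some $i$, $S$ is assigned $\uparrow$ if it contains $e_{k+1-i}-e_n$ and $\downarrow$ if it contains $e_{k+1-i}+e_n$ (for such $i$). $\Theta(k,2n)$ is the set of subsets $S$ of the union of the two regions meeting each region in a lower order ideal of that region and such that, for each top root $e_a+e_b$, $e_a+e_b\in S$ whenever $S$ contains more than $2n-2k$ roots of the diamonds indexed by $a$ and $b$ (diamonds $k+1-a$, $k+1-b$) combined, and $e_a+e_b\notin S$ whenever fewer. $\tilde P(n-k,n)$ is the set of pairs $(\gamma;t)$ with $\gamma=(\gamma_1\ge\dots\ge\gamma_k\ge0)$,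 $\gamma_1\le 2n-1-k$, $\gamma_i>\gamma_{i+1}$ whenever $\gamma_i>n-k$, and $t=0$ if no part of $\gamma$ equals $n-k$, $t\in\{1,2\}$ otherwise. *)

(* Defs.v *)
From mathcomp Require Import all_boot all_order all_algebra.
Set Implicit Arguments. Unset Strict Implicit. Unset Printing Implicit Defensive.
Import GRing.Theory Num.Theory.

(* A triple (x, y, s) : 'I_n * 'I_n * bool with x < y encodes
   the positive root e_a + e_b (s = true) or e_a - e_b (s = false), where
   a = x+1 and b = y+1 are the 1-based indices used in the paper. *)
Definition rootD (n : nat) := ('I_n * 'I_n * bool)%type.

Definition valid_root n (r : rootD n) : bool :=
  let: (x, y, _) := r in (x < y)%N.

(* standard basis vector e_i (1-based i) of Z^n *)
Definition ev n (i : nat) : 'I_n -> int := fun j => Posz ((j.+1 == i) : nat).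

Definition rvec n (r : rootD n) : 'I_n -> int :=
  let: (x, y, s) := r in
  fun j => (ev x.+1 j + (if s then 1 else -1) * ev y.+1 j)%R.

(* simple roots: e_i - e_{i+1} (1 <= i < n) indexed by j = i-1, and
   e_{n-1} + e_n indexed by j = n-1 *)
Definition simple n (l : 'I_n) : 'I_n -> int :=
  fun j => if (l.+1 < n)%N then (ev l.+1 j - ev l.+2 j)%R
           else (ev n.-1 j + ev n j)%R.

Definition root_le n (r1 r2 : rootD n) : Prop :=
  exists c : 'I_n -> nat, forall j : 'I_n,
    (rvec r2 j - rvec r1 j = \sum_(l < n) (Posz (c l)) * simple l j)%R.

Definition base_region n k (r : rootD n) : bool :=
  let: (x, y, _) := r in (x < y)%N && (x.+1 <= k < y.+1)%N.

Definition top_region n k (r : rootD n) : bool :=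
  let: (x, y, s) := r in [&& s, (x < y)%N & (y.+1 <= k)%N].

Definition lower_ideal_in n (R : pred (rootD n)) (S : {set rootD n}) : Prop :=
  forall r1 r2, R r1 -> R r2 -> root_le r1 r2 -> r2 \in S -> r1 \in S.

Definition diamond n k (i : nat) (r : rootD n) : bool :=
  let: (x, y, _) := r in (x.+1 == k.+1 - i)%N && (k < y.+1)%N.

Definition lambda1 n k (S : {set rootD n}) (i : nat) : nat :=
  #|[set r in S | diamond k i r]|.

Definition lambda2 n k (S : {set rootD n}) (i : nat) : nat :=
  #|[set r in S | let: (x, y, s) := r in
                  [&& s, (y.+1 == k.+1 - i)%N & (x < y)%N]]|.

Definition Theta n k (S : {set rootD n}) : Prop :=
  [/\ (forall r, r \in S -> base_region k r || top_region k r),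
      lower_ideal_in (base_region k) S,
      lower_ideal_in (top_region k) S &
      (forall x y : 'I_n, (x < y)%N -> (y.+1 <= k)%N ->
         let tot := (lambda1 k S (k.+1 - x.+1) + lambda1 k S (k.+1 - y.+1))%N in
         ((2 * n - 2 * k < tot)%N -> (x, y, true) \in S) /\
         ((tot < 2 * n - 2 * k)%N -> (x, y, true) \notin S))].

Definition has_end n k (S : {set rootD n}) (i : nat) (s : bool) : bool :=
  [exists r in S, let: (x, y, s') := r in
     [&& (x.+1 == k.+1 - i)%N, (y.+1 == n)%N & s' == s]].

Definition arrow_up n k (S : {set rootD n}) : bool :=
  [exists i : 'I_k, (lambda1 k S i.+1 == n - k)%N && has_end k S i.+1 false].

Definition arrow_down n k (S : {set rootD n}) : bool :=
  [exists i : 'I_k, (lambda1 k S i.+1 == n - k)%N && has_end k S i.+1 true].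

Definition tval n k (S : {set rootD n}) : nat :=
  if arrow_up k S then 1 else if arrow_down k S then 2 else 0.

(* F_k(S) = ((lambda1_i + lambda2_i)_{1<=i<=k}; t); gamma_i = nth 0 gamma (i-1) *)
Definition Fk n k (S : {set rootD n}) : seq nat * nat :=
  ([seq (lambda1 k S i + lambda2 k S i)%N | i <- iota 1 k], tval k S).

Definition Ptilde (m n : nat) (p : seq nat * nat) : Prop :=
  let: (g, t) := p in
  let k := (n - m)%N in
  [/\ size g = k,
      (forall i, (i.+1 < k)%N -> (nth 0 g i.+1 <= nth 0 g i)%N),
      (nth 0 g 0 <= 2 * n - 1 - k)%N,
      (forall i, (i.+1 < k)%N -> (m < nth 0 g i)%N -> (nth 0 g i.+1 < nth 0 g i)%N) &
      (if m \in g then (t == 1) || (t == 2) else t == 0)].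

(* Main.v *)
Require Import Defs.
From mathcomp Require Import all_boot all_order all_algebra.
From mathcomp Require Import ring lra zify.
Set Implicit Arguments. Unset Strict Implicit. Unset Printing Implicit Defensive.
Import GRing.Theory Num.Theory.
Open Scope nat_scope.

Definition rt n (x y : nat) (s : bool) : rootD n.+1 := (inord x, inord y, s).
Definition inS n (S : {set rootD n.+1}) x y s : bool := rt n x y s \in S.
Definition Dl n k (S : {set rootD n.+1}) x :=
  \sum_(k <= y < n.+1) (inS S x y false + inS S x y true).
Definition Ml n (S : {set rootD n.+1}) y := \sum_(0 <= x < y) inS S x y true.

Lemma sum_root n (f : rootD n -> nat) :
  \sum_(r : rootD n) f r = \sum_(x < n) \sum_(y < n) \sum_(s : bool) f ((x, y), s).
Proof.
rewrite pair_bigA /= (pair_bigA _ (fun xy s => f ((xy.1, xy.2), s))) /=.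
by apply: eq_bigr => [[[x y] s]].
Qed.

Lemma card_sum3 n (P : 'I_n -> 'I_n -> bool -> bool) :
  #|[set r : rootD n | P r.1.1 r.1.2 r.2]| =
  \sum_(x < n) \sum_(y < n) (P x y true + P x y false).
Proof.
rewrite -sum1_card big_mkcond /= sum_root.
apply: eq_bigr => x _; apply: eq_bigr => y _.
by rewrite big_bool /= !inE; case: (P x y true); case: (P x y false).
Qed.

Lemma sum_pick n (x0 : nat) (F : 'I_n.+1 -> nat) : x0 <= n ->
  \sum_(x < n.+1) ((x == x0 :> nat) * F x) = F (inord x0).
Proof.
move=> h; rewrite (bigD1 (inord x0)) //= inordK // eqxx mul1n big1 ?addn0 //.
move=> x hx; case: eqP => //= ex; move: hx; suff -> : x = inord x0 by rewrite eqxx.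
by apply: val_inj; rewrite /= inordK.
Qed.

Lemma sum_ord_nat n a (F : nat -> nat) : a <= n ->
  \sum_(y < n) ((a <= y) * F y) = \sum_(a <= y < n) F y.
Proof.
move=> h; rewrite -(big_mkord xpredT (fun y => (a <= y) * F y)).
rewrite (big_cat_nat (leq0n a) h) /= big1_seq ?add0n.
  by apply: eq_big_nat => y /andP [-> _]; rewrite mul1n.
by move=> y /andP [_]; rewrite mem_iota subn0 add0n => /andP [_ hy]; rewrite leqNgt hy.
Qed.

Lemma sum_ord_lt n a (F : nat -> nat) : a <= n ->
  \sum_(y < n) ((y < a) * F y) = \sum_(0 <= y < a) F y.
Proof.
move=> h; rewrite -(big_mkord xpredT (fun y => (y < a) * F y)).
rewrite (big_cat_nat (leq0n a) h) /= [X in _ + X]big1_seq ?addn0.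
  by apply: eq_big_nat => y /andP [_ ->]; rewrite mul1n.
by move=> y /andP [_]; rewrite mem_iota subnKC // => /andP [ha _]; rewrite ltnNge ha.
Qed.

Lemma lambda1E n k (S : {set rootD n.+1}) i : i <= k -> k <= n ->
  lambda1 k S i = Dl k S (k - i).
Proof.
move=> hi hk; rewrite /lambda1.
pose P (x y : 'I_n.+1) (s : bool) := ((x, y, s) \in S) && ((x.+1 == k.+1 - i) && (k < y.+1)).
have -> : [set r in S | diamond k i r] = [set r : rootD n.+1 | P r.1.1 r.1.2 r.2].
  by apply/setP => [[[x y] s]]; rewrite !inE.
rewrite card_sum3.
transitivity (\sum_(x < n.+1) ((x == k - i :> nat) *
   \sum_(y < n.+1) ((k <= y) * (inS S x y false + inS S x y true)))).
  apply: eq_bigr => x _; rewrite big_distrr /=; apply: eq_bigr => y _.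
  rewrite /P /inS /rt !inord_val subSn // eqSS ltnS.
  case: (x == k - i :> nat); case: (k <= y); case: ((x, y, true) \in S);
    by case: ((x, y, false) \in S).
have hki : k - i <= n by rewrite (leq_trans (leq_subr _ _) hk).
rewrite (sum_pick (fun x : 'I_n.+1 => \sum_(y < n.+1) ((k <= y) * (inS S x y false + inS S x y true))) hki).
rewrite inordK ?ltnS //.
by rewrite (sum_ord_nat (fun y => inS S (k - i) y false + inS S (k - i) y true)) // leqW.
Qed.

Lemma lambda2E n k (S : {set rootD n.+1}) i : i <= k -> k <= n ->
  lambda2 k S i = Ml S (k - i).
Proof.
move=> hi hk; rewrite /lambda2.
pose P (x y : 'I_n.+1) (s : bool) := ((x, y, s) \in S) && [&& s, y.+1 == k.+1 - i & x < y].
have -> : [set r in S | let: (x, y, s) := r in [&& s, y.+1 == k.+1 - i & x < y]]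
   = [set r : rootD n.+1 | P r.1.1 r.1.2 r.2].
  by apply/setP => [[[x y] s]]; rewrite !inE.
rewrite card_sum3.
have hki : k - i <= n by rewrite (leq_trans (leq_subr _ _) hk).
transitivity (\sum_(y < n.+1) ((y == k - i :> nat) *
   \sum_(x < n.+1) ((x < k - i) * inS S x (k - i) true))).
  rewrite exchange_big /=; apply: eq_bigr => y _; rewrite big_distrr /=; apply: eq_bigr => x _.
  rewrite /P subSn // eqSS.
  case: (eqVneq (y : nat) (k - i)) => [ey | ney].
    rewrite -ey /inS /rt !inord_val /= andbF addn0 mul1n.
    by case: (_ \in S); case: (x < y).
  by rewrite !andbF.
rewrite (sum_pick (fun y : 'I_n.+1 => \sum_(x < n.+1) ((x < k - i) * inS S x (k - i) true)) hki).
by rewrite (sum_ord_lt (fun x => inS S x (k - i) true)) // leqW.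
Qed.
Lemma root_le1 n (r1 r2 : rootD n) (l0 : 'I_n) :
  (forall j, (rvec r2 j - rvec r1 j = simple l0 j)%R) -> root_le r1 r2.
Proof.
move=> H; exists (fun l => (l == l0 : nat)) => j.
rewrite H (bigD1 l0) //= eqxx big1 ?addr0 ?mul1r // => l /negbTE ->.
by rewrite mul0r.
Qed.

Lemma rvec_rt n x y s (j : 'I_n.+1) : x <= n -> y <= n ->
  rvec (rt n x y s) j = (Posz (j == x :> nat) + (if s then 1 else -1) * Posz (j == y :> nat))%R.
Proof. by move=> hx hy; rewrite /rvec /rt /ev !inordK. Qed.

Lemma simple_mid n l (j : 'I_n.+1) : l < n ->
  simple (inord l : 'I_n.+1) j = (Posz (j == l :> nat) - Posz (j == l.+1 :> nat))%R.
Proof. by move=> hl; rewrite /simple /ev inordK ?ltnS ?hl // ltnW. Qed.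

Lemma simple_last n (j : 'I_n.+2) :
  simple (inord n.+1 : 'I_n.+2) j = (Posz (j == n :> nat) + Posz (j == n.+1 :> nat))%R.
Proof. by rewrite /simple /ev inordK // ltnn. Qed.

Lemma step_x n x y s : x < n -> y <= n -> root_le (rt n x.+1 y s) (rt n x y s).
Proof.
move=> hx hy; apply: (root_le1 (l0 := inord x)) => j.
have hx' : x <= n by apply: ltnW.
rewrite !rvec_rt // simple_mid //; ring.
Qed.

Lemma step_yp n x y : x <= n -> y < n -> root_le (rt n x y.+1 true) (rt n x y true).
Proof.
move=> hx hy; apply: (root_le1 (l0 := inord y)) => j.
have hy' : y <= n by apply: ltnW.
rewrite !rvec_rt // simple_mid //; ring.
Qed.

Lemma step_ym n x y : x <= n -> y < n -> root_le (rt n x y false) (rt n x y.+1 false).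
Proof.
move=> hx hy; apply: (root_le1 (l0 := inord y)) => j.
have hy' : y <= n by apply: ltnW.
rewrite !rvec_rt // simple_mid //; ring.
Qed.

Lemma step_d n x : x <= n.+1 -> root_le (rt n.+1 x n false) (rt n.+1 x n.+1 true).
Proof.
move=> hx; apply: (root_le1 (l0 := inord n.+1)) => j.
have h1 : n <= n.+1 by [].
rewrite !rvec_rt // simple_last; ring.
Qed.

Lemma step_e n x : x <= n.+1 -> root_le (rt n.+1 x n.+1 false) (rt n.+1 x n true).
Proof.
move=> hx; apply: (root_le1 (l0 := inord n.+1)) => j.
have h1 : n <= n.+1 by [].
rewrite !rvec_rt // simple_last; ring.
Qed.


Lemma sum_ub_lt a b c (P : nat -> bool) :
  (forall y, a <= y < b -> P y -> y < c) -> \sum_(a <= y < b) P y <= c - a.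
Proof.
suff: forall b', (forall y, a <= y < b' -> P y -> y < c) -> \sum_(a <= y < b') P y <= minn b' c - a.
  by move=> h H; apply: leq_trans (h b H) _; lia.
elim=> [|b' IH] H; first by rewrite big_geq.
case: (leqP a b') => hab; last by rewrite big_geq.
rewrite big_nat_recr //=.
have IH' := IH (fun y hy => H y (ltac:(lia))).
case hPb: (P b'); last by rewrite addn0; lia.
have := H b' (ltac:(lia)) hPb; lia.
Qed.

Lemma sum_ub_ge a b c (P : nat -> bool) :
  (forall y, a <= y < b -> P y -> c <= y) -> \sum_(a <= y < b) P y <= b - c.
Proof.
elim: b => [|b IH] H; first by rewrite big_geq.
case: (leqP a b) => hab; last by rewrite big_geq.
rewrite big_nat_recr //=.
have IH' := IH (fun y hy => H y (ltac:(lia))).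
case hPb: (P b); last by rewrite addn0; lia.
have := H b (ltac:(lia)) hPb; lia.
Qed.

Lemma sum_lb_lt a b c (P : nat -> bool) :
  (forall y, a <= y < c -> P y) -> c <= b -> c - a <= \sum_(a <= y < b) P y.
Proof.
move=> H hcb; case: (leqP a c) => hac; last by have -> : c - a = 0 by lia.
rewrite (big_cat_nat hac hcb) /=.
have -> : \sum_(a <= y < c) P y = \sum_(a <= y < c) 1.
  by apply: eq_big_nat => y hy; rewrite H.
by rewrite sum_nat_const_nat muln1 leq_addr.
Qed.

Lemma sum_lb_ge a b c (P : nat -> bool) :
  (forall y, c <= y < b -> P y) -> a <= c -> b - c <= \sum_(a <= y < b) P y.
Proof.
move=> H hac; case: (leqP c b) => hcb; last by have -> : b - c = 0 by lia.
rewrite (big_cat_nat hac hcb) /=.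
have -> : \sum_(c <= y < b) P y = \sum_(c <= y < b) 1.
  by apply: eq_big_nat => y hy; rewrite H.
by rewrite sum_nat_const_nat muln1 leq_addl.
Qed.


Lemma base_rt n k x y s : x <= n -> y <= n ->
  base_region k (rt n x y s) = (x < y) && (x < k <= y).
Proof. by move=> hx hy; rewrite /base_region /rt !inordK. Qed.

Lemma top_rt n k x y s : x <= n -> y <= n ->
  top_region k (rt n x y s) = [&& s, x < y & y < k].
Proof. by move=> hx hy; rewrite /top_region /rt !inordK. Qed.

Section Facts.
Variables (n k : nat) (S : {set rootD n.+2}).
Hypothesis hk1 : 0 < k.
Hypothesis hkn : k <= n.+1.
Hypothesis HT : Theta k S.

Let Hbase : lower_ideal_in (base_region k) S. Proof. by case: HT. Qed.
Let Htop : lower_ideal_in (top_region k) S. Proof. by case: HT. Qed.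

Lemma Bx1 x y s : x.+1 < k -> k <= y <= n.+1 -> inS S x y s -> inS S x.+1 y s.
Proof.
move=> hx hy; apply: Hbase; rewrite ?base_rt //; try lia.
by apply: step_x; lia.
Qed.

Lemma Bx x x' y s : x <= x' < k -> k <= y <= n.+1 -> inS S x y s -> inS S x' y s.
Proof.
move=> /andP [h1 h2] hy; have -> : x' = x + (x' - x) by lia.
have : x + (x' - x) < k by lia.
elim: (x' - x) => [|d IH] hd; first by rewrite addn0.
move=> H; rewrite addnS; apply: Bx1 => //; first by lia.
by apply: IH => //; lia.
Qed.

Lemma Tx1 x y : x.+1 < y -> y < k -> inS S x y true -> inS S x.+1 y true.
Proof.
move=> hx hy; apply: Htop; rewrite ?top_rt //=; try lia.
by apply: step_x; lia.
Qed.

Lemma Tx x x' y : x <= x' < y -> y < k -> inS S x y true -> inS S x' y true.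
Proof.
move=> /andP [h1 h2] hy; have -> : x' = x + (x' - x) by lia.
have : x + (x' - x) < y by lia.
elim: (x' - x) => [|d IH] hd; first by rewrite addn0.
move=> H; rewrite addnS; apply: Tx1 => //; first by lia.
by apply: IH => //; lia.
Qed.

Lemma Ty1 x y : x < y -> y.+1 < k -> inS S x y true -> inS S x y.+1 true.
Proof.
move=> hx hy; apply: Htop; rewrite ?top_rt //=; try lia.
by apply: step_yp; lia.
Qed.

Lemma Bmn1 x y : x < k -> k <= y -> y <= n -> inS S x y.+1 false -> inS S x y false.
Proof.
move=> hx hy hy'; apply: Hbase; rewrite ?base_rt //; try lia.
by apply: step_ym; lia.
Qed.

Lemma Bpl1 x y : x < k -> k <= y -> y <= n -> inS S x y true -> inS S x y.+1 true.
Proof.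
move=> hx hy hy'; apply: Hbase; rewrite ?base_rt //; try lia.
by apply: step_yp; lia.
Qed.

Lemma Bd x : x < k -> k <= n -> inS S x n.+1 true -> inS S x n false.
Proof.
move=> hx hkn'; apply: Hbase; rewrite ?base_rt //; try lia.
by apply: step_d; lia.
Qed.

Lemma Be x : x < k -> k <= n -> inS S x n true -> inS S x n.+1 false.
Proof.
move=> hx hkn'; apply: Hbase; rewrite ?base_rt //; try lia.
by apply: step_e; lia.
Qed.


Lemma MN x y y' : x < k -> k <= y' <= y -> y <= n.+1 -> inS S x y false -> inS S x y' false.
Proof.
move=> hx /andP [h1 h2] hy; have -> : y = y' + (y - y') by lia.
have : y' + (y - y') <= n.+1 by lia.
elim: (y - y') => [|d IH] hd; first by rewrite addn0.
move=> H; apply: IH; first by lia.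
rewrite addnS in H; apply: (Bmn1 _ _ _ H); lia.
Qed.

Lemma PL x y y' : x < k -> k <= y <= y' -> y' <= n.+1 -> inS S x y true -> inS S x y' true.
Proof.
move=> hx /andP [h1 h2] hy; have -> : y' = y + (y' - y) by lia.
have : y + (y' - y) <= n.+1 by lia.
elim: (y' - y) => [|d IH] hd; first by rewrite addn0.
move=> H; rewrite addnS.
have H' : inS S x (y + d) true by apply: IH => //; lia.
apply: (Bpl1 _ _ _ H'); lia.
Qed.

Lemma PLMN2 x y : x < k -> k <= y <= n -> inS S x y true -> inS S x n.+1 false.
Proof.
move=> hx hy H; apply: Be => //; first by lia.
by apply: (PL (y := y)) => //; lia.
Qed.

Lemma PLMN x y y' : x < k -> k <= y <= n.+1 -> k <= y' <= n -> inS S x y true -> inS S x y' false.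
Proof.
move=> hx hy hy' H; case: (leqP y n) => hyn.
  have H2 : inS S x n.+1 false by apply: (PLMN2 (y := y)) => //; lia.
  by apply: (MN (y := n.+1)) => //; lia.
have ey : y = n.+1 by lia.
rewrite ey in H.
have H2 : inS S x n false by apply: Bd => //; lia.
by apply: (MN (y := n)) => //; lia.
Qed.

Lemma Dsplit x : Dl k S x = \sum_(k <= y < n.+1) inS S x y false +
  \sum_(k <= y < n.+1) inS S x y true + inS S x n.+1 false + inS S x n.+1 true.
Proof. by rewrite /Dl big_nat_recr // big_split /=; lia. Qed.

Lemma Dle x : Dl k S x <= 2 * (n.+2 - k).
Proof.
rewrite Dsplit.
have h1 := @sum_ub_lt k n.+1 n.+1 (fun y => inS S x y false) (fun y hy _ => ltac:(lia)).
have h2 := @sum_ub_lt k n.+1 n.+1 (fun y => inS S x y true) (fun y hy _ => ltac:(lia)).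
by case: (inS S x n.+1 false); case: (inS S x n.+1 true); simpl in *; lia.
Qed.

Lemma C1 x y0 : x < k -> k <= y0 <= n -> inS S x y0 false = (y0 - k < Dl k S x).
Proof.
move=> hx hy0; rewrite Dsplit; apply/idP/idP => [H | ].
  have h := @sum_lb_lt k n.+1 y0.+1 (fun y => inS S x y false)
     (fun y hy => MN (y := y0) (y' := y) hx (ltac:(lia)) (ltac:(lia)) H) (ltac:(lia)).
  simpl in h; lia.
case h: (inS S x y0 false) => //.
have h1 : \sum_(k <= y < n.+1) inS S x y false <= y0 - k.
  apply: sum_ub_lt => y hy Py; rewrite ltnNge; apply/negP => hle.
  by rewrite (MN (y := y) (y' := y0) hx (ltac:(lia)) (ltac:(lia)) Py) in h.
have h2 : \sum_(k <= y < n.+1) inS S x y true <= k - k.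
  apply: sum_ub_lt => y hy Py; exfalso.
  by rewrite (PLMN (y := y) (y' := y0) hx (ltac:(lia)) hy0 Py) in h.
have h3 : inS S x n.+1 false = false.
  apply/negP => Py.
  by rewrite (MN (y := n.+1) (y' := y0) hx (ltac:(lia)) (ltac:(lia)) Py) in h.
have h4 : inS S x n.+1 true = false.
  apply/negP => Py.
  by rewrite (PLMN (y := n.+1) (y' := y0) hx (ltac:(lia)) hy0 Py) in h.
rewrite h3 h4; lia.
Qed.

Lemma C2 x y0 : x < k -> k <= y0 <= n -> inS S x y0 true = (n.+2 + n.+2 - k - y0 <= Dl k S x).
Proof.
move=> hx hy0; rewrite Dsplit; apply/idP/idP => [H | ].
  have h1 := @sum_lb_lt k n.+1 n.+1 (fun y => inS S x y false)
     (fun y hy => PLMN (y := y0) (y' := y) hx (ltac:(lia)) (ltac:(lia)) H) (leqnn _).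
  have h2 := @sum_lb_ge k n.+1 y0 (fun y => inS S x y true)
     (fun y hy => PL (y := y0) (y' := y) hx (ltac:(lia)) (ltac:(lia)) H) (ltac:(lia)).
  rewrite (PLMN2 (y := y0) hx (ltac:(lia)) H) (PL (y := y0) (y' := n.+1) hx (ltac:(lia)) (leqnn _) H).
  simpl in *; lia.
case h: (inS S x y0 true) => //.
have h1 := @sum_ub_lt k n.+1 n.+1 (fun y => inS S x y false) (fun y hy _ => ltac:(lia)).
have h2 : \sum_(k <= y < n.+1) inS S x y true <= n.+1 - y0.+1.
  apply: sum_ub_ge => y hy Py; rewrite ltnNge; apply/negP => hle.
  by rewrite (PL (y := y) (y' := y0) hx (ltac:(lia)) (ltac:(lia)) Py) in h.
simpl in *.
by case: (inS S x n.+1 false); case: (inS S x n.+1 true); simpl; lia.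
Qed.

Lemma C3a x : x < k -> (inS S x n.+1 false || inS S x n.+1 true) = (n.+2 - k <= Dl k S x).
Proof.
move=> hx; rewrite Dsplit; apply/idP/idP => [H | ].
  have h1 : n.+1 - k <= \sum_(k <= y < n.+1) inS S x y false.
    apply: sum_lb_lt (leqnn _) => y hy.
    case/orP: H => H.
      by apply: (MN (y := n.+1)) => //; lia.
    by apply: (PLMN (y := n.+1)) => //; lia.
  by case/orP: H => ->; simpl in *; lia.
case h: (inS S x n.+1 false); case h': (inS S x n.+1 true) => //=.
have h1 := @sum_ub_lt k n.+1 n.+1 (fun y => inS S x y false) (fun y hy _ => ltac:(lia)).
have h2 : \sum_(k <= y < n.+1) inS S x y true <= k - k.
  apply: sum_ub_lt => y hy Py; exfalso.
  by rewrite (PLMN2 (y := y) hx (ltac:(lia)) Py) in h.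
simpl in *; lia.
Qed.

Lemma C3b x : x < k -> (inS S x n.+1 false && inS S x n.+1 true) = (n.+2 - k < Dl k S x).
Proof.
move=> hx; rewrite Dsplit; apply/idP/idP => [/andP [H1 H2] | ].
  have h1 : n.+1 - k <= \sum_(k <= y < n.+1) inS S x y false.
    apply: sum_lb_lt (leqnn _) => y hy.
    by apply: (MN (y := n.+1)) => //; lia.
  rewrite H1 H2; simpl in *; lia.
have h1 := @sum_ub_lt k n.+1 n.+1 (fun y => inS S x y false) (fun y hy _ => ltac:(lia)).
case h: (inS S x n.+1 false); case h': (inS S x n.+1 true) => //=.
- have h2 : \sum_(k <= y < n.+1) inS S x y true <= k - k.
    apply: sum_ub_lt => y hy Py; exfalso.
    by rewrite (PL (y := y) (y' := n.+1) hx (ltac:(lia)) (leqnn _) Py) in h'.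
  simpl in *; lia.
- have h2 : \sum_(k <= y < n.+1) inS S x y true <= k - k.
    apply: sum_ub_lt => y hy Py; exfalso.
    by rewrite (PLMN2 (y := y) hx (ltac:(lia)) Py) in h.
  simpl in *; lia.
- have h2 : \sum_(k <= y < n.+1) inS S x y true <= k - k.
    apply: sum_ub_lt => y hy Py; exfalso.
    by rewrite (PLMN2 (y := y) hx (ltac:(lia)) Py) in h.
  simpl in *; lia.
Qed.

End Facts.


Section Main.
Variables (n k : nat) (S : {set rootD n.+2}).
Hypothesis hk1 : 0 < k.
Hypothesis hkn : k <= n.+1.
Hypothesis HT : Theta k S.

Local Notation m := (n.+2 - k).
Local Notation D := (Dl k S).
Local Notation M := (Ml S).

Lemma Th x y : x < y -> y < k ->
  (2 * n.+2 - 2 * k < D x + D y -> inS S x y true) /\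
  (D x + D y < 2 * n.+2 - 2 * k -> ~~ inS S x y true).
Proof.
move=> hxy hyk; case: HT => _ _ _ H.
have hx : x <= n.+1 by lia.
have hy : y <= n.+1 by lia.
have := H (inord x) (inord y); rewrite !inordK //.
move=> /(_ hxy hyk) /=.
rewrite !subSS !lambda1E; try lia.
by rewrite !(subKn (ltnW _)) //; lia.
Qed.

Lemma Dmono x x' : x <= x' < k -> D x <= D x'.
Proof.
move=> hx; rewrite /Dl big_nat_cond [X in _ <= X]big_nat_cond.
apply: leq_sum => y /andP [hy _].
apply: leq_add.
  case h: (inS S x y false) => //=.
  by rewrite (Bx hk1 hkn HT (x := x) (x' := x') (y := y)) //; lia.
case h: (inS S x y true) => //=.
by rewrite (Bx hk1 hkn HT (x := x) (x' := x') (y := y)) //; lia.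
Qed.

Lemma Mstep y : y.+1 < k -> M y + inS S y y.+1 true <= M y.+1.
Proof.
move=> hy; rewrite /Ml big_nat_recr //=; apply: leq_add => //.
rewrite big_nat_cond [X in _ <= X]big_nat_cond.
apply: leq_sum => x /andP [hx _].
case h: (inS S x y true) => //=.
by rewrite (Ty1 hk1 hkn HT (x := x) (y := y)) //; lia.
Qed.

Lemma Mle y : M y <= y.
Proof.
have := @sum_ub_lt 0 y y (fun x => inS S x y true) (fun x hx _ => ltac:(lia)).
by rewrite subn0.
Qed.

Lemma M0 x : x < k -> D x < m -> M x = 0.
Proof.
move=> hx hD; apply/eqP; rewrite -leqn0.
have : M x <= 0 - 0; last by rewrite subn0.
apply: sum_ub_lt => x' hx' Px.
have hm := Dmono (x := x') (x' := x) (ltac:(lia)).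
have [_ H] := Th (x := x') (y := x) (ltac:(lia)) hx.
by rewrite Px in H; move: (H (ltac:(lia))).
Qed.

Lemma Mpos y : 0 < M y -> exists2 x, x < y & inS S x y true.
Proof.
move=> hM; case: (boolP [exists x : 'I_y, inS S x y true]) => [/existsP [x hx] | hn].
  by exists x.
have : M y <= 0 - 0.
  apply: sum_ub_lt => x hx Px; exfalso; move/negP: hn; apply.
  by apply/existsP; exists (Ordinal (ltac:(lia) : x < y)).
lia.
Qed.

Let G x := D x + M x.

Lemma P1 z : z.+1 < k -> G z <= G z.+1.
Proof.
move=> hz; rewrite /G; apply: leq_add; first by apply: Dmono; lia.
by have := Mstep hz; lia.
Qed.

Lemma P2 : G k.-1 <= 2 * n.+2 - 1 - k.
Proof.
rewrite /G; have := Dle S hk1 hkn k.-1; have := Mle k.-1; lia.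
Qed.

Lemma P3 z : z.+1 < k -> m < G z.+1 -> G z < G z.+1.
Proof.
move=> hz hG; rewrite /G in hG *.
have hD := Dmono (x := z) (x' := z.+1) (ltac:(lia)).
have hM := Mstep hz.
case: (ltngtP (D z) (D z.+1)) => hDz; [lia | lia | ].
case: (ltngtP (D z.+1) m) => hm.
- by have := M0 (x := z.+1) (ltac:(lia)) hm; lia.
- have [H _] := Th (x := z) (y := z.+1) (ltac:(lia)) (ltac:(lia)).
  by rewrite H in hM; lia.
- have [x hx Px] := Mpos (y := z.+1) (ltac:(lia)).
  have := Tx hk1 hkn HT (x := x) (x' := z) (y := z.+1) (ltac:(lia)) (ltac:(lia)) Px.
  by move=> H; rewrite H in hM; lia.
Qed.

Lemma Gm z : z < k -> G z = m -> D z = m.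
Proof.
move=> hz; rewrite /G => hG.
case: (ltngtP (D z) m) => hm //.
- by have := M0 hz hm; lia.
- lia.
Qed.

Lemma Gex z0 : z0 < k -> D z0 = m -> exists2 z', z' < k & G z' = m.
Proof.
elim: z0.+1 {-2}z0 (ltnSn z0) => // N IH z hzN hz hDz.
case: (posnP (M z)) => hMz.
  by exists z => //; rewrite /G hMz hDz addn0.
have [x hx Px] := Mpos hMz.
have [_ H] := Th (x := x) (y := z) hx hz.
have hxz := Dmono (x := x) (x' := z) (ltac:(lia)).
have hDx : D x = m.
  case: (ltnP (D x + D z) (2 * n.+2 - 2 * k)) => h; first by rewrite Px in H; move: (H h).
  lia.
by apply: (IH x) => //; lia.
Qed.


Lemma has_endE i s : i <= k -> has_end k S i s = inS S (k - i) n.+1 s.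
Proof.
move=> hi; apply/existsP/idP => [[[[x y] s'] /andP [hin /and3P [hx hy hs]]] | H].
  have ex : x = inord (k - i).
    by apply: val_inj; rewrite /= inordK; move/eqP: hx; lia.
  have ey : y = inord n.+1.
    by apply: val_inj; rewrite /= inordK //; move/eqP: hy; lia.
  by rewrite /inS /rt -ex -ey -(eqP hs).
exists (rt n.+1 (k - i) n.+1 s); apply/andP; split; first exact: H.
rewrite /rt /= !inordK ?eqxx ?andbT //; try lia.
Qed.

Lemma arrowP s : [exists i : 'I_k, (lambda1 k S i.+1 == n.+2 - k) && has_end k S i.+1 s] <->
  exists2 x, x < k & (D x = m) /\ inS S x n.+1 s.
Proof.
split.
  case/existsP => i /andP [/eqP hl he].
  have hi := ltn_ord i.
  exists (k - i.+1); first by lia.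
  rewrite lambda1E in hl; try lia.
  rewrite has_endE in he; try lia.
move=> [x hx [hD hin]]; apply/existsP.
have hkx : k - x.+1 < k by lia.
exists (Ordinal hkx); rewrite /= subnSK //.
rewrite lambda1E ?has_endE; try lia.
by rewrite subKn ?hD ?eqxx ?hin //; lia.
Qed.

Lemma nth_g j : j < k ->
  nth 0 [seq lambda1 k S i + lambda2 k S i | i <- iota 1 k] j = G (k - j.+1).
Proof.
move=> hj; rewrite (nth_map 0) ?size_iota // nth_iota // add1n.
by rewrite lambda1E ?lambda2E //; lia.
Qed.

Lemma Ptilde_main : Ptilde (n.+2 - k) n.+2 (Fk k S).
Proof.
rewrite /Ptilde /Fk.
have -> : n.+2 - (n.+2 - k) = k by apply: subKn; lia.
split.
- by rewrite size_map size_iota.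
- move=> i hi; rewrite !nth_g; try lia.
  have := P1 (z := k - i.+2) (ltac:(lia)).
  by have -> : (k - i.+2).+1 = k - i.+1 by lia.
- rewrite nth_g // subn1; exact: P2.
- move=> i hi; rewrite !nth_g; try lia.
  have := P3 (z := k - i.+2) (ltac:(lia)).
  by have -> : (k - i.+2).+1 = k - i.+1 by lia.
case: ifP => hin.
  move/mapP: hin => [i hi he]; rewrite mem_iota in hi.
  rewrite lambda1E ?lambda2E in he; try lia.
  have hD := Gm (z := k - i) (ltac:(lia)) (esym he).
  have := C3a hk1 hkn HT (x := k - i) (ltac:(lia)); rewrite hD leqnn => /orP [hf | ht].
    have hup : arrow_up k S by apply/(arrowP false); exists (k - i) => //; lia.
    by rewrite /Defs.tval hup.
  rewrite /Defs.tval; case: ifP => // _.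
  have hdn : arrow_down k S by apply/(arrowP true); exists (k - i) => //; lia.
  by rewrite hdn.
rewrite /Defs.tval.
have nota : forall s, ~ [exists i : 'I_k, (lambda1 k S i.+1 == n.+2 - k) && has_end k S i.+1 s].
  move=> s /(arrowP s) [x hx [hD _]].
  have [z hz hG] := Gex hx hD.
  move/negP: hin; apply; apply/mapP; exists (k - z).
    by rewrite mem_iota; lia.
  by rewrite lambda1E ?lambda2E ?subKn //; lia.
case: ifP => [h|_]; first by exfalso; apply: (nota false).
by case: ifP => [h|_] //; exfalso; apply: (nota true).
Qed.

End Main.


Section Inj.
Variables (n k : nat).
Hypothesis hk1 : 0 < k.
Hypothesis hkn : k <= n.+1.

Local Notation m := (n.+2 - k).

Lemma topchar (S : {set rootD n.+2}) (HT : Theta k S) x y : x < y -> y < k ->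
  inS S x y true = (y - x <= Ml S y).
Proof.
move=> hxy hyk; apply/idP/idP => [H | ].
  have := @sum_lb_ge 0 y x (fun x' => inS S x' y true)
    (fun x' hx' => Tx hk1 hkn HT (x := x) (x' := x') (y := y) (ltac:(lia)) hyk H) (leq0n _).
  by [].
case h: (inS S x y true) => //.
have : Ml S y <= y - x.+1.
  apply: sum_ub_ge => x' hx' Px; rewrite ltnNge; apply/negP => hle.
  by rewrite (Tx hk1 hkn HT (x := x') (x' := x) (y := y) (ltac:(lia)) hyk Px) in h.
lia.
Qed.

Lemma Mcross (S1 S2 : {set rootD n.+2}) (HT1 : Theta k S1) (HT2 : Theta k S2) z :
  z < k -> (forall x, x < z -> Dl k S1 x = Dl k S2 x) -> Dl k S1 z < Dl k S2 z ->
  Ml S1 z <= Ml S2 z.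
Proof.
move=> hz hlt hD; rewrite /Ml big_nat_cond [X in _ <= X]big_nat_cond.
apply: leq_sum => x /andP [hx _].
case h: (inS S1 x z true) => //=.
have [_ H1] := Th hk1 hkn HT1 (x := x) (y := z) (ltac:(lia)) hz.
have [H2 _] := Th hk1 hkn HT2 (x := x) (y := z) (ltac:(lia)) hz.
have hx' := hlt x (ltac:(lia)).
case: (ltnP (Dl k S1 x + Dl k S1 z) (2 * n.+2 - 2 * k)) => h'.
  by rewrite h in H1; move: (H1 h').
by rewrite H2 //; lia.
Qed.

Lemma endeq (S1 S2 : {set rootD n.+2}) (HT1 : Theta k S1) (HT2 : Theta k S2) x :
  x < k -> Dl k S1 x = m -> Dl k S2 x = m -> Defs.tval k S1 = Defs.tval k S2 ->
  inS S1 x n.+1 false -> inS S2 x n.+1 false.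
Proof.
move=> hx hD1 hD2 ht H1.
have hup1 : arrow_up k S1 by apply/(@arrowP n k S1 hk1 hkn false); exists x.
have : arrow_up k S2.
  move: ht; rewrite /Defs.tval hup1.
  by case: (arrow_up k S2) => //; case: (arrow_down k S2).
move/(@arrowP n k S2 hk1 hkn false) => [x' hx' [hD' H']].
case h: (inS S2 x n.+1 false) => //.
have := C3a hk1 hkn HT2 (x := x) hx; rewrite hD2 leqnn h /= => ht2.
case: (leqP x x') => hxx.
  have := Bx hk1 hkn HT2 (x := x) (x' := x') (y := n.+1) (s := true) (ltac:(lia)) (ltac:(lia)) ht2.
  move=> ht2'.
  have := C3b hk1 hkn HT2 (x := x') hx'; rewrite H' ht2' hD' ltnn //.
have := Bx hk1 hkn HT2 (x := x') (x' := x) (y := n.+1) (s := false) (ltac:(lia)) (ltac:(lia)) H'.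
by rewrite h.
Qed.

Lemma basechar (S1 S2 : {set rootD n.+2}) (HT1 : Theta k S1) (HT2 : Theta k S2) x y s :
  x < k -> k <= y <= n.+1 -> Dl k S1 x = Dl k S2 x ->
  Defs.tval k S1 = Defs.tval k S2 -> inS S1 x y s = inS S2 x y s.
Proof.
move=> hx hy hD ht; case: (leqP y n) => hyn.
  case: s.
    by rewrite (C2 hk1 hkn HT1 (x := x) (y0 := y)) ?(C2 hk1 hkn HT2 (x := x) (y0 := y)) ?hD //; lia.
  by rewrite (C1 hk1 hkn HT1 (x := x) (y0 := y)) ?(C1 hk1 hkn HT2 (x := x) (y0 := y)) ?hD //; lia.
have -> : y = n.+1 by lia.
have a1 := C3a hk1 hkn HT1 (x := x) hx.
have a2 := C3a hk1 hkn HT2 (x := x) hx.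
have b1 := C3b hk1 hkn HT1 (x := x) hx.
have b2 := C3b hk1 hkn HT2 (x := x) hx.
rewrite -hD in a2 b2.
case: (ltngtP (Dl k S1 x) m) => hm.
- move: a1 a2; rewrite leqNgt hm /=.
  by case: s; case: (inS S1 x n.+1 _); case: (inS S2 x n.+1 _); case: (inS S1 x n.+1 _);
     case: (inS S2 x n.+1 _).
- move: b1 b2; rewrite hm.
  by case: s; move=> /andP [? ?] /andP [? ?]; apply/idP/idP.
- have e1 := endeq HT1 HT2 hx hm (ltac:(lia)) ht.
  have e2 := endeq HT2 HT1 hx (ltac:(lia)) hm (esym ht).
  have ef : inS S1 x n.+1 false = inS S2 x n.+1 false by apply/idP/idP.
  move: a1 a2 b1 b2; rewrite hm leqnn ltnn ef.
  case: s => //.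
  by case: (inS S1 x n.+1 true); case: (inS S2 x n.+1 true); case: (inS S2 x n.+1 false).
Qed.

End Inj.


Lemma inj_main n k (hk1 : 0 < k) (hkn : k <= n.+1) (S1 S2 : {set rootD n.+2})
  (HT1 : Theta k S1) (HT2 : Theta k S2) : Fk k S1 = Fk k S2 -> S1 = S2.
Proof.
move=> [hg ht].
have hG : forall z, z < k -> Dl k S1 z + Ml S1 z = Dl k S2 z + Ml S2 z.
  move=> z hz; have := congr1 (fun g => nth 0 g (k - z.+1)) hg.
  rewrite /= (@nth_g n k S1 hkn) ?(@nth_g n k S2 hkn); try lia.
  by have -> : k - (k - z.+1).+1 = z by lia.
have hD : forall z, z < k -> Dl k S1 z = Dl k S2 z.
  move=> z0; elim: z0.+1 {-2}z0 (ltnSn z0) => // N IH z hzN hz.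
  have hlt : forall x, x < z -> Dl k S1 x = Dl k S2 x by move=> x hx; apply: IH; lia.
  case: (ltngtP (Dl k S1 z) (Dl k S2 z)) => h //.
  - by have := Mcross hk1 hkn HT1 HT2 hz hlt h; have := hG z hz; lia.
  - by have := Mcross hk1 hkn HT2 HT1 hz (fun x hx => esym (hlt x hx)) h; have := hG z hz; lia.
have hM : forall z, z < k -> Ml S1 z = Ml S2 z.
  by move=> z hz; have := hG z hz; have := hD z hz; lia.
have hmem : forall r : rootD n.+2, base_region k r || top_region k r -> (r \in S1) = (r \in S2).
  move=> [[x y] s] hr.
  have e1 : ((x, y, s) \in S1) = inS S1 x y s by rewrite /inS /rt !inord_val.
  have e2 : ((x, y, s) \in S2) = inS S2 x y s by rewrite /inS /rt !inord_val.
  rewrite e1 e2; case/orP: hr => [hb | htp].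
    rewrite /base_region in hb.
    have hy := ltn_ord y.
    apply: (basechar hk1 hkn HT1 HT2) => //; try lia.
      by apply: hD; lia.
  move: htp; rewrite /top_region /= => /and3P [hs hxy hyk].
  rewrite hs (topchar hk1 hkn HT1) ?(topchar hk1 hkn HT2) ?hM //; lia.
case: HT1 => Hr1 _ _ _; case: HT2 => Hr2 _ _ _.
apply/setP => r; case h1: (r \in S1); case h2: (r \in S2) => //.
  by move: (hmem r (Hr1 r h1)); rewrite h1 h2.
by move: (hmem r (Hr2 r h2)); rewrite h1 h2.
Qed.

Theorem lemma3p16 (n k : nat) (hk1 : (1 <= k)%N) (hkn : (k < n)%N) :
  (forall S : {set rootD n}, Theta k S -> Ptilde (n - k) n (Fk k S)) /\
  (forall S1 S2 : {set rootD n}, Theta k S1 -> Theta k S2 ->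
     Fk k S1 = Fk k S2 -> S1 = S2).
Proof.
case: n hkn => [|[|n]] hkn; try lia.
have hkn' : k <= n.+1 by lia.
split; first by move=> S HS; apply: Ptilde_main.
by move=> S1 S2 H1 H2 HF; apply: (inj_main hk1 hkn' H1 H2).
Qed.
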